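(* Let $p(\cdot),q(\cdot),r(\cdot)\in\mathcal{P}(\mathbb{R}^n)$ satisfy $\frac{1}{r(x)}=\frac{1}{p(x)}+\frac{1}{q(x)}$, and assume either $r(\cdot)<p(\cdot)<\infty$, or $r(\cdot)\le p(\cdot)<\infty$ with $r^+<\infty$. For measurable $f$ set $\|f\|^*_{p(\cdot)}=\sup_{\|g\|_{q(\cdot)}\le1}\|fg\|_{r(\cdot)}$. Then $\|f\|^*_{p(\cdot)}\approx\|f\|_{p(\cdot)}$, i.e. there are constants $c_1,c_2>0$ independent of $f$ with $c_1\|f\|_{p(\cdot)}\le\|f\|^*_{p(\cdot)}\le c_2\|f\|_{p(\cdot)}$.
   Context: $\mathcal{P}(\mathbb{R}^n)$: measurable $p(\cdot):\mathbb{R}^n\to[1,\infty]$; $p^+$ essential supremum. $\|f\|_{p(\cdot)}=\inf\{\lambda>0:\int_{\{p<\infty\}}|f/\lambda|^{p(x)}dx+\|(f/\lambda)\chi_{\{p=\infty\}}\|_\infty\le1\}$. *)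

(* Defs.v *)
From mathcomp Require Import all_boot all_algebra.
From mathcomp Require Import all_classical all_reals all_analysis measurable_realfun ess_sup_inf.
Import GRing.Theory Num.Theory.
Import numFieldNormedType.Exports.

Set Implicit Arguments.
Unset Strict Implicit.
Unset Printing Implicit Defensive.

Local Open Scope classical_set_scope.
Local Open Scope ring_scope.
Local Open Scope ereal_scope.

(* R^n is modelled as n.-tuple R, with the product (= Borel) sigma-algebra
   provided by MathComp-Analysis.  The n-dimensional Lebesgue measure is
   characterised as the (unique) measure that is the n-fold product of the
   one-dimensional Lebesgue measure on measurable rectangles. *)
Definition is_lebesgue_n (R : realType) (n : nat)
    (mu : {measure set (n.-tuple R) -> \bar R}) : Prop :=
  forall A : 'I_n -> set R, (forall i, measurable (A i)) ->
    mu [set t | forall i, A i (tnth t i)] =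
      \big[*%E/1%E]_(i < n) lebesgue_measure (A i).

Definition var_exponent (R : realType) (n : nat)
    (p : n.-tuple R -> \bar R) : Prop :=
  measurable_fun setT p /\ forall x, 1 <= p x.

(* 1/p with the convention 1/oo = 0 (exponents are >= 1). *)
Definition einv (R : realType) (a : \bar R) : R :=
  match a with EFin r => r^-1 | _ => 0%R end.

Definition modular (R : realType) (n : nat)
    (mu : {measure set (n.-tuple R) -> \bar R})
    (p : n.-tuple R -> \bar R) (f : n.-tuple R -> R) : \bar R :=
  (\int[mu]_(x in [set x | p x < +oo]) ((`|f x| `^ fine (p x))%R)%:E)
  + ess_sup mu (fun x => if p x == +oo then (`|f x|)%:E else 0).

(* Luxemburg norm ||f||_{p(.)} (equal to +oo if no lambda works). *)
Definition vnorm (R : realType) (n : nat)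
    (mu : {measure set (n.-tuple R) -> \bar R})
    (p : n.-tuple R -> \bar R) (f : n.-tuple R -> R) : \bar R :=
  ereal_inf [set lam%:E | lam in
    [set lam : R | (0 < lam)%R /\ modular mu p (fun x => f x / lam)%R <= 1]].

Definition dual_vnorm (R : realType) (n : nat)
    (mu : {measure set (n.-tuple R) -> \bar R})
    (q r : n.-tuple R -> \bar R) (f : n.-tuple R -> R) : \bar R :=
  ereal_sup [set vnorm mu r (fun x => f x * g x)%R | g in
    [set g : n.-tuple R -> R | measurable_fun setT g /\ vnorm mu q g <= 1]].

(* Main.v *)
Require Import Defs.
From mathcomp Require Import all_boot all_algebra.
From mathcomp Require Import all_classical all_reals all_analysis measurable_realfun ess_sup_inf.
From mathcomp Require Import ring lra.
Import order.Order.TTheory GRing.Theory Num.Theory.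
Import numFieldNormedType.Exports.
Set Implicit Arguments.
Unset Strict Implicit.
Unset Printing Implicit Defensive.
Local Open Scope classical_set_scope.
Local Open Scope ring_scope.
Local Open Scope ereal_scope.

Lemma measurable_powR2 d (T : measurableType d) (R : realType) (a b : T -> R) :
  measurable_fun setT a -> measurable_fun setT b ->
  measurable_fun setT (fun x => (a x `^ b x)%R).
Proof.
move=> ma mb.
rewrite /powR.
apply: (measurable_fun_ifT (f := fun x => a x == 0%R)).
- by apply: measurable_fun_eqr => //; exact: measurable_cst.
- have -> : (fun x => ((b x == 0%R)%:R : R)) = (fun x => if b x == 0%R then 1 else 0)%R.
    by apply: funext => x; case: (b x == 0%R).
  apply: (measurable_fun_ifT (f := fun x => b x == 0%R)).
  + by apply: measurable_fun_eqr => //; exact: measurable_cst.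
  + exact: measurable_cst.
  + exact: measurable_cst.
- apply: measurableT_comp; first exact: measurable_expR.
  apply: measurable_funM => //.
  by apply: measurableT_comp => //; exact: measurable_ln.
Qed.

Lemma einvE (R : realType) (a : \bar R) : einv a = ((fine a)^-1)%R.
Proof. by case: a => //=; rewrite invr0. Qed.

Lemma measurable_fine_comp d (T : measurableType d) (R : realType) (p : T -> \bar R) :
  measurable_fun setT p -> measurable_fun setT (fun x => fine (p x)).
Proof. by move=> mp; apply: measurableT_comp => //; exact: fine_measurable. Qed.

Lemma measurable_einv_comp d (T : measurableType d) (R : realType) (p : T -> \bar R) :
  measurable_fun setT p -> (forall x, 1 <= p x) ->
  measurable_fun setT (fun x => einv (p x)).
Proof.
move=> mp p1.
have -> : (fun x => einv (p x)) = (fun x => (fine (p x)) `^ (-1))%R.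
  apply: funext => x; rewrite einvE powR_inv1 //.
  move: (p1 x); case: (p x) => //= r; by rewrite lee_fin => /(le_trans ler01).
apply: measurable_powR2; first exact: measurable_fine_comp.
exact: measurable_cst.
Qed.

Lemma mod_fin (R : realType) (n : nat) (mu : {measure set (n.-tuple R) -> \bar R})
  (p : n.-tuple R -> \bar R) (h : n.-tuple R -> R) :
  0 < mu setT -> (forall x, p x < +oo) ->
  modular mu p h = \int[mu]_x ((`|h x| `^ fine (p x))%R)%:E.
Proof.
move=> mu0 pfin; rewrite /modular.
have -> : [set x | p x < +oo] = setT by apply/seteqP; split => x //= _; exact: pfin.
have -> : (fun x => if p x == +oo then (`|h x|)%:E else 0) = cst 0.
  by apply: funext => x; rewrite (lt_eqF (pfin x)).
by rewrite ess_sup_cst // adde0.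
Qed.

Lemma ess_sup_ge0 (R : realType) (n : nat) (mu : {measure set (n.-tuple R) -> \bar R})
  (h : n.-tuple R -> \bar R) : 0 < mu setT -> (forall x, 0 <= h x) -> 0 <= ess_sup mu h.
Proof.
move=> mu0 h0; rewrite -(ess_sup_cst (0 : \bar R) mu0); apply: le_ess_sup.
by apply: aeW => x; exact: h0.
Qed.

Lemma vnorm_le (R : realType) (n : nat) (mu : {measure set (n.-tuple R) -> \bar R})
  (p : n.-tuple R -> \bar R) (f : n.-tuple R -> R) (lam : R) :
  (0 < lam)%R -> modular mu p (fun x => f x / lam)%R <= 1 -> vnorm mu p f <= lam%:E.
Proof. by move=> l0 m1; apply: ereal_inf_lbound; exists lam. Qed.

Lemma vnorm_ge0 (R : realType) (n : nat) (mu : {measure set (n.-tuple R) -> \bar R})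
  (p : n.-tuple R -> \bar R) (f : n.-tuple R -> R) : 0 <= vnorm mu p f.
Proof. by apply/ereal_infP => _ [l [l0 _] <-]; rewrite lee_fin ltW. Qed.

Lemma vnorm_lt (R : realType) (n : nat) (mu : {measure set (n.-tuple R) -> \bar R})
  (p : n.-tuple R -> \bar R) (f : n.-tuple R -> R) (t : R) :
  vnorm mu p f < t%:E -> exists lam : R, [/\ (0 < lam)%R, (lam < t)%R &
     modular mu p (fun x => f x / lam)%R <= 1].
Proof.
by move=> /ereal_inf_lt [_ [l [l0 m1] <-]]; rewrite lte_fin => lt; exists l.
Qed.

Local Open Scope ring_scope.

Lemma young_pt (R : realType) (a b P Q Rr : R) : 0 <= a -> 0 <= b ->
  1 <= P -> 1 <= Q -> 1 <= Rr -> Rr^-1 = P^-1 + Q^-1 ->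
  (a * b) `^ Rr <= a `^ P + b `^ Q.
Proof.
move=> a0 b0 P1 Q1 R1 hR.
have P0 : 0 < P by exact: lt_le_trans ltr01 P1.
have Q0 : 0 < Q by exact: lt_le_trans ltr01 Q1.
have R0 : 0 < Rr by exact: lt_le_trans ltr01 R1.
have RP : Rr / P <= 1.
  rewrite ler_pdivrMr // mul1r -(lef_pV2 (x := P)) ?posrE // hR lerDl invr_ge0 ltW //.
have RQ : Rr / Q <= 1.
  rewrite ler_pdivrMr // mul1r -(lef_pV2 (x := Q)) ?posrE // hR lerDr invr_ge0 ltW //.
rewrite powRM //.
have := @conjugate_powR R (a `^ Rr) (b `^ Rr) (P / Rr) (Q / Rr) (powR_ge0 _ _)
  (powR_ge0 _ _) (divr_gt0 P0 R0) (divr_gt0 Q0 R0).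
rewrite !invf_div -mulrDr -hR divff ?gt_eqF // => /(_ erefl) H.
apply: (le_trans H); apply: lerD.
- rewrite -powRrM [Rr * _]mulrC divfK ?gt_eqF //.
  by apply: ler_piMr => //; exact: powR_ge0.
- rewrite -powRrM [Rr * _]mulrC divfK ?gt_eqF //.
  by apply: ler_piMr => //; exact: powR_ge0.
Qed.

Lemma holder_pt (R : realType) (pe qe re : \bar R) (a b : R) : 0 <= a -> 0 <= b ->
  (1 <= pe)%E -> (1 <= qe)%E -> (1 <= re)%E -> (pe < +oo)%E -> (re < +oo)%E ->
  einv re = einv pe + einv qe -> (qe = +oo%E -> b <= 1) ->
  (2^-1 * (a * b)) `^ fine re <=
    2^-1 * (a `^ fine pe + (if (qe < +oo)%E then b `^ fine qe else 0)).
Proof.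
move=> a0 b0; case: pe => [P| |] //; case: re => [Rr| |] //.
rewrite !lee_fin /= => P1 q1 R1 _ _.
have R0 : 0 < Rr by exact: lt_le_trans ltr01 R1.
rewrite powRM ?mulr_ge0 //.
have h2 : (2^-1 : R) `^ Rr <= 2^-1.
  by apply: ge1r_powR => //; rewrite invr_gt0 ltr0n /= invf_le1 // ler1n.
have le1 : forall X : R, 0 <= X -> X <= a `^ P + (if (qe < +oo)%E then b `^ fine qe else 0) ->
   (2^-1 : R) `^ Rr * X <= 2^-1 * (a `^ P + (if (qe < +oo)%E then b `^ fine qe else 0)).
  by move=> X X0 HX; apply: ler_pM => //; exact: powR_ge0.
move=> hR bq; apply: le1; first exact: powR_ge0.
move: q1 hR bq; case: qe => [Q| |] //=.
- rewrite lee_fin => Q1 hR _; rewrite ltry.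
  by apply: young_pt.
- move=> _ hR /(_ erefl) b1; rewrite addr0 in hR.
  move/invr_inj : hR => ->.
  rewrite powRM //. idtac.
  have P0 : 0 <= P by exact: le_trans ler01 P1.
  have := @ge0_ler_powR R P P0 b 1; rewrite powR1 => H.
  rewrite addr0 -[X in _ <= X]mulr1 ler_pM //; try exact: powR_ge0.
  by apply: H; rewrite ?nnegrE.
Qed.

Lemma mpowR d (T : measurableType d) (R : realType) (h : T -> R) (p : T -> \bar R) :
  measurable_fun setT h -> measurable_fun setT p ->
  measurable_fun setT (fun x => (`|h x| `^ fine (p x))%R).
Proof.
move=> mh mp; apply: measurable_powR2.
- exact: (measurableT_comp (@normr_measurable R setT) mh).
- exact: measurable_fine_comp.
Qed.

Lemma mpowE d (T : measurableType d) (R : realType) (h : T -> R) (p : T -> \bar R) :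
  measurable_fun setT h -> measurable_fun setT p ->
  measurable_fun setT (fun x => ((`|h x| `^ fine (p x))%R)%:E).
Proof.
move=> mh mp; apply/measurable_EFinP; apply: measurable_powR2.
- exact: (measurableT_comp (@normr_measurable R setT) mh).
- exact: measurable_fine_comp.
Qed.

Lemma mdiv d (T : measurableType d) (R : realType) (h : T -> R) (c : R) :
  measurable_fun setT h -> measurable_fun setT (fun x => h x / c).
Proof. by move=> mh; apply: measurable_funM => //; exact: measurable_cst. Qed.

Lemma holder_mod (R : realType) (n : nat) (mu : {measure set (n.-tuple R) -> \bar R})
  (p q r : n.-tuple R -> \bar R) (f g : n.-tuple R -> R) (lf lg : R) :
  (0 < mu setT)%E ->
  var_exponent p -> var_exponent q -> var_exponent r ->
  (forall x, einv (r x) = einv (p x) + einv (q x)) ->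
  (forall x, r x <= p x < +oo)%E ->
  measurable_fun setT f -> measurable_fun setT g ->
  0 < lf -> 0 < lg ->
  (modular mu p (fun x => f x / lf)%R <= 1)%E ->
  (modular mu q (fun x => g x / lg)%R <= 1)%E ->
  (modular mu r (fun x => f x * g x / (2 * (lf * lg)))%R <= 1)%E.
Proof.
move=> mu0 [mp p1] [mq q1] [mr r1] hpqr hrp mf mg lf0 lg0 Hf Hg.
have pfin x : (p x < +oo)%E by case/andP: (hrp x).
have rfin x : (r x < +oo)%E by case/andP: (hrp x) => /le_lt_trans; apply.
rewrite (@mod_fin _ _ mu _ _ mu0 rfin); rewrite (@mod_fin _ _ mu _ _ mu0 pfin) in Hf.
move: Hg; rewrite /modular.
set Iq := (\int[mu]_(x in _) _)%E.
set Sq := ess_sup _ _ => Hg.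
have Iq0 : (0 <= Iq)%E by apply: integral_ge0 => x _; rewrite lee_fin powR_ge0.
have Sq0 : (0 <= Sq)%E.
  by apply: (@ess_sup_ge0 _ _ mu) => // x; case: ifP => // _; rewrite lee_fin.
have Iq1 : (Iq <= 1)%E by apply: le_trans Hg; exact: leeDl.
have Sq1 : (Sq <= 1)%E by apply: le_trans Hg; rewrite addeC; exact: leeDl.
have aeb := ess_supP Sq1.
set A := fun x => `|f x / lf| `^ fine (p x).
set B := fun x => if (q x < +oo)%E then `|g x / lg| `^ fine (q x) else 0.
have mA : measurable_fun setT A.
  exact: (mpowR (mdiv lf mf) mp).
have mB : measurable_fun setT B.
  apply: (measurable_fun_ifT (f := fun x => (q x < +oo)%E)).
  - by apply: measurable_fun_lte => //; exact: measurable_cst.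
  - exact: (mpowR (mdiv lg mg) mq).
  - exact: measurable_cst.
have A0 x : 0 <= A x by exact: powR_ge0.
have B0 x : 0 <= B x by rewrite /B; case: ifP => // _; exact: powR_ge0.
apply: (@le_trans _ _ (\int[mu]_x ((2^-1 * (A x + B x))%:E))%E).
  apply: ae_ge0_le_integral => //.
  - exact: (mpowE (mdiv (2 * (lf * lg)) (measurable_funM mf mg)) mr).
  - by move=> x _; rewrite lee_fin mulr_ge0 ?addr_ge0.
  - apply/measurable_EFinP; apply: measurable_funM; first exact: measurable_cst.
    exact: measurable_funD.
  apply: filterS aeb => x bx _; rewrite lee_fin.
  have -> : f x * g x / (2 * (lf * lg)) = 2^-1 * ((f x / lf) * (g x / lg)).
    by field; rewrite ?gt_eqF.
  rewrite normrM (ger0_norm (_ : 0 <= 2^-1)) ?invr_ge0 ?ler0n // normrM.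
  apply: holder_pt => //.
  by move=> qoo; move: bx; rewrite qoo eqxx lee_fin.
under eq_integral do rewrite EFinM EFinD.
have mAB : measurable_fun setT (fun x => (A x)%:E + (B x)%:E)%E.
  rewrite (_ : (fun x => _) = EFin \o (fun x => A x + B x)); last first.
    by apply: funext => x; rewrite /= EFinD.
  by apply/measurable_EFinP; exact: measurable_funD.
have AB0 : forall x, setT x -> (0 <= (A x)%:E + (B x)%:E)%E.
  by move=> x _; rewrite -EFinD lee_fin addr_ge0.
have mA' : measurable_fun setT (fun x => (A x)%:E) by apply/measurable_EFinP.
have mB' : measurable_fun setT (fun x => (B x)%:E) by apply/measurable_EFinP.
have A0' : forall x, setT x -> (0 <= (A x)%:E)%E by move=> x _; rewrite lee_fin.
have B0' : forall x, setT x -> (0 <= (B x)%:E)%E by move=> x _; rewrite lee_fin.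
rewrite ge0_integralZl //.
rewrite ge0_integralD //.
have -> : (\int[mu]_x (B x)%:E)%E = Iq.
  rewrite /Iq [RHS]integral_mkcond; apply: eq_integral => x _.
  rewrite patchE /B; case: (boolP (q x < +oo)%E) => h.
    by rewrite mem_set.
  by rewrite memNset //; apply/negP.
apply: (@le_trans _ _ ((2^-1)%:E * (1 + 1))%E).
  apply: lee_wpmul2l; first by rewrite lee_fin invr_ge0 ler0n.
  exact: leeD.
by rewrite -EFinD -EFinM mulVf // pnatr_eq0.
Qed.

Lemma upper_bound (R : realType) (n : nat) (mu : {measure set (n.-tuple R) -> \bar R})
  (p q r : n.-tuple R -> \bar R) (f g : n.-tuple R -> R) :
  (0 < mu setT)%E ->
  var_exponent p -> var_exponent q -> var_exponent r ->
  (forall x, einv (r x) = einv (p x) + einv (q x)) ->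
  (forall x, r x <= p x < +oo)%E ->
  measurable_fun setT f -> measurable_fun setT g ->
  (vnorm mu q g <= 1)%E ->
  (vnorm mu r (fun x => f x * g x)%R <= 2%:E * vnorm mu p f)%E.
Proof.
move=> mu0 vp vq vr hpqr hrp mf mg vg.
have := vnorm_ge0 mu p f.
case vf: (vnorm mu p f) => [a| |] // a0.
  have key : forall w, a < w -> (vnorm mu r (fun x => f x * g x)%R <= ((2 * w)%R)%:E)%E.
    move=> w aw.
    have a0' : 0 <= a by rewrite -lee_fin.
    set m := (a + w) / 2.
    have am : a < m by rewrite /m; lra.
    have mw : m < w by rewrite /m; lra.
    have m0 : 0 < m by lra.
    have [lf [lf0 lfm Hf]] : exists lam : R, [/\ (0 < lam)%R, (lam < m)%R &
        (modular mu p (fun x => f x / lam)%R <= 1)%E].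
      by apply: vnorm_lt; rewrite vf lte_fin.
    have [lg [lg0 lgm Hg]] : exists lam : R, [/\ (0 < lam)%R, (lam < w / m)%R &
        (modular mu q (fun x => g x / lam)%R <= 1)%E].
      apply: vnorm_lt; apply: le_lt_trans vg _; rewrite lte_fin.
      by rewrite ltr_pdivlMr // mul1r.
    apply: (@le_trans _ _ ((2 * (lf * lg))%R)%:E).
      apply: vnorm_le; first by rewrite !mulr_gt0.
      apply: holder_mod => //; [exact: vp|exact: vq].
    rewrite lee_fin ler_pM2l //.
    apply: (@le_trans _ _ (m * (w / m))); first by apply: ler_pM; rewrite ?ltW.
    by rewrite mulrC divfK // gt_eqF.
  apply/lee_addgt0Pr => e e0.
  apply: (@le_trans _ _ ((2 * (a + e / 2))%R)%:E); first by apply: key; lra.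
  by rewrite -EFinM -EFinD lee_fin; lra.
by rewrite mulry gtr0_sg // mul1e leey.
Qed.

Lemma pt_g_q (R : realType) (a M P Q : R) : 0 <= a -> 0 < M -> 1 <= Q ->
  (2^-1 * (a `^ (P * Q^-1) * M `^ (- Q^-1))) `^ Q <= 2^-1 * (a `^ P / M).
Proof.
move=> a0 M0 Q1.
have Q0 : 0 < Q by exact: lt_le_trans ltr01 Q1.
rewrite powRM ?mulr_ge0 ?invr_ge0 ?ler0n ?powR_ge0 //.
rewrite powRM ?powR_ge0 // -!powRrM mulfVK ?gt_eqF // mulNr mulVf ?gt_eqF //.
rewrite (powR_inv1 (ltW M0)).
apply: ler_pM => //.
- by rewrite mulr_ge0 ?powR_ge0 // invr_ge0 ltW.
- by apply: ge1r_powR => //; rewrite invr_gt0 ltr0n /= invf_le1 // ler1n.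
Qed.

Lemma pt_r (R : realType) (a M k P Rr iq : R) : 0 <= a -> 1 <= M -> 1 <= k ->
  1 <= P -> 1 <= Rr -> 0 <= iq -> Rr^-1 = P^-1 + iq ->
  k * (a `^ P / M) <= (k * a * (a `^ (P * iq) * M `^ (- iq))) `^ Rr.
Proof.
move=> a0 M1 k1 P1 R1 iq0 hR.
have P0 : 0 < P by exact: lt_le_trans ltr01 P1.
have R0 : 0 < Rr by exact: lt_le_trans ltr01 R1.
have M0 : 0 < M by exact: lt_le_trans ltr01 M1.
have k0 : 0 <= k by exact: le_trans ler01 k1.
rewrite !powRM ?mulr_ge0 ?powR_ge0 // -!powRrM.
have eP : Rr + P * iq * Rr = P.
  have -> : iq = Rr^-1 - P^-1 by rewrite hR addrC addKr.
  by field; rewrite ?gt_eqF.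
rewrite -mulrA [a `^ Rr * _]mulrA -powRD; last by rewrite eP gt_eqF.
rewrite eP.
apply: ler_pM => //; first by rewrite mulr_ge0 ?powR_ge0 // invr_ge0 ltW.
- exact: le1r_powR.
apply: ler_wpM2l; first exact: powR_ge0.
rewrite -(powR_inv1 (ltW M0)); apply: ler_powR => //.
rewrite mulNr lerN2 -(mulVf (lt0r_neq0 R0)) ler_pM2r // hR lerDr invr_ge0 ltW //.
Qed.

Lemma einv_ge0 (R : realType) (a : \bar R) : (1 <= a)%E -> 0 <= einv a.
Proof. by case: a => //= r; rewrite lee_fin => r1; rewrite invr_ge0 (le_trans ler01). Qed.

Lemma lower_from_E (R : realType) (n : nat) (mu : {measure set (n.-tuple R) -> \bar R})
  (p q r : n.-tuple R -> \bar R) (f : n.-tuple R -> R) (lam : R) (E : set (n.-tuple R)) :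
  (0 < mu setT)%E ->
  var_exponent p -> var_exponent q -> var_exponent r ->
  (forall x, einv (r x) = einv (p x) + einv (q x)) ->
  (forall x, r x <= p x < +oo)%E ->
  measurable_fun setT f -> measurable E -> 0 < lam ->
  (1 < \int[mu]_x ((`|f x / lam| `^ fine (p x) * \1_E x)%:E))%E ->
  (\int[mu]_x ((`|f x / lam| `^ fine (p x) * \1_E x)%:E) < +oo)%E ->
  ((lam / 2)%:E <= dual_vnorm mu q r f)%E.
Proof.
move=> mu0 [mp p1] [mq q1] [mr r1] hpqr hrp mf mE lam0 I1 Ifin.
have pfin x : (p x < +oo)%E by case/andP: (hrp x).
have rfin x : (r x < +oo)%E by case/andP: (hrp x) => /le_lt_trans; apply.
set a := fun x => `|f x / lam|.
set F := fun x => a x `^ fine (p x) * \1_E x.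
set I := (\int[mu]_x (F x)%:E)%E.
have F0 x : 0 <= F x by rewrite mulr_ge0 ?powR_ge0 // indicE ler0n.
have I0 : (0 <= I)%E by apply: integral_ge0 => x _; rewrite lee_fin.
set M := fine I.
have IM : I = M%:E by rewrite fineK // ge0_fin_numE.
have M1 : 1 < M by rewrite -lte_fin -IM.
have M0 : 0 < M by exact: lt_trans ltr01 M1.
have mF : measurable_fun setT F.
  apply: measurable_funM; first exact: (mpowR (mdiv lam mf) mp).
  exact: measurable_indic.
set iq := fun x => einv (q x).
have miq : measurable_fun setT iq by exact: measurable_einv_comp.
have iq0 x : 0 <= iq x by exact: einv_ge0.
set g := fun x => 2^-1 * (a x `^ (fine (p x) * iq x) * M `^ (- iq x)) * \1_E x.
have mg : measurable_fun setT g.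
  apply: measurable_funM; last exact: measurable_indic.
  apply: measurable_funM; first exact: measurable_cst.
  apply: measurable_funM; apply: measurable_powR2.
  - exact: (measurableT_comp (@normr_measurable R setT) (mdiv lam mf)).
  - by apply: measurable_funM => //; exact: measurable_fine_comp.
  - exact: measurable_cst.
  - exact: measurable_funN.
have g0 x : 0 <= g x.
  by rewrite /g !mulr_ge0 ?powR_ge0 ?invr_ge0 ?ler0n // indicE ler0n.
apply: (@le_trans _ _ (vnorm mu r (fun x => f x * g x)%R)).
  apply/ereal_infP => _ [s [s0 Hs] <-].
  rewrite lee_fin leNgt; apply/negP => slt.
  move: Hs; apply/negP; rewrite -ltNge.
  rewrite (@mod_fin _ _ mu _ _ mu0 rfin).
  set k := lam / (2 * s).
  have k1 : 1 < k by rewrite /k ltr_pdivlMr ?mulr_gt0 // mul1r; lra.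
  have k0 : 0 < k by exact: lt_trans ltr01 k1.
  apply: (@lt_le_trans _ _ (k%:E)); first by rewrite lte_fin.
  have -> : k%:E = (\int[mu]_x ((k / M * F x)%:E))%E.
    under eq_integral do rewrite EFinM.
    rewrite ge0_integralZl.
    - by rewrite -/I IM -EFinM divfK ?gt_eqF.
    - exact: measurableT.
    - by apply/measurable_EFinP.
    - by move=> x _; rewrite lee_fin.
    - by rewrite lee_fin divr_ge0 // ltW.
  apply: ge0_le_integral.
  - exact: measurableT.
  - by move=> x _; rewrite lee_fin mulr_ge0 // divr_ge0 // ltW.
  - by apply/measurable_EFinP; apply: measurable_funM; [exact: measurable_cst | exact: mF].
  - exact: (mpowE (mdiv s (measurable_funM mf mg)) mr).
  move=> x _; rewrite lee_fin.
  have [Rr rR R1] : exists2 Rr : R, r x = Rr%:E & 1 <= Rr.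
    by move: (r1 x) (rfin x); case: (r x) => // Rr; rewrite lee_fin => ? _; exists Rr.
  have [P pP P1] : exists2 P : R, p x = P%:E & 1 <= P.
    by move: (p1 x) (pfin x); case: (p x) => // P; rewrite lee_fin => ? _; exists P.
  have hR : Rr^-1 = P^-1 + iq x by move: (hpqr x); rewrite rR pP.
  rewrite /F /g rR pP /= indicE; case: (x \in E) => /=.
    rewrite !mulr1.
    set X := (a x `^ (P * iq x) * M `^ (- iq x)).
    have X0 : 0 <= X by rewrite mulr_ge0 ?powR_ge0.
    have -> : f x * (2^-1 * X) / s = (f x / lam) * (k * X).
      by rewrite /k; field; rewrite ?gt_eqF.
    rewrite normrM (ger0_norm (mulr_ge0 (ltW k0) X0)) -/(a x).
    rewrite mulrAC -mulrA [a x * _]mulrC mulrA.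
    rewrite -[k * X * a x]mulrA [X * a x]mulrC.
    have H := @pt_r R (a x) M k P Rr (iq x) (normr_ge0 _) (ltW M1) (ltW k1) P1 R1 (iq0 x) hR.
    rewrite -/X in H.
    apply: le_trans (le_trans H _); first by rewrite mulrA.
    by rewrite [k * (a x * X)]mulrA.
  by rewrite !mulr0 powR_ge0.
apply: ereal_sup_ubound; exists g => //; split => //.
apply: (@vnorm_le _ _ mu q g 1 ltr01).
have -> : (fun x => g x / 1) = g by apply: funext => x; rewrite divr1.
rewrite /modular.
have mD : measurable [set x | (q x < +oo)%E].
  rewrite -[X in measurable X]setTI; apply: measurable_lte => //.
have HI : (\int[mu]_(x in [set x | (q x < +oo)%E]) ((`|g x| `^ fine (q x))%:E)
    <= (2^-1)%:E)%E.
  apply: (@le_trans _ _ (\int[mu]_(x in [set x | (q x < +oo)%E]) ((2^-1 / M * F x)%:E))%E).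
    apply: ge0_le_integral.
    - exact: mD.
    - by move=> x _; rewrite lee_fin powR_ge0.
    - exact: measurable_funS (mpowE mg mq).
    - apply: measurable_funS (_ : measurable_fun setT _) => //.
      by apply/measurable_EFinP; apply: measurable_funM; [exact: measurable_cst | exact: mF].
    move=> x /= qx; rewrite lee_fin ger0_norm //.
    have [Q qQ Q1] : exists2 Q : R, q x = Q%:E & 1 <= Q.
      by move: (q1 x) qx; case: (q x) => // Q; rewrite lee_fin => Q1 _; exists Q.
    have Q0 : 0 < Q by exact: lt_le_trans ltr01 Q1.
    rewrite /g /F /iq qQ /= indicE; case: (x \in E) => /=.
      rewrite !mulr1 mulrAC -mulrA.
      exact: (@pt_g_q R (a x) M (fine (p x)) Q (normr_ge0 _) M0 Q1).
    by rewrite !mulr0 powR0 ?gt_eqF.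
  apply: (@le_trans _ _ (\int[mu]_x ((2^-1 / M * F x)%:E))%E).
    apply: ge0_subset_integral.
    - exact: mD.
    - exact: measurableT.
    - by apply/measurable_EFinP; apply: measurable_funM; [exact: measurable_cst | exact: mF].
    - by move=> x _; rewrite lee_fin mulr_ge0 // divr_ge0 ?invr_ge0 ?ler0n // ltW.
    - by [].
  under eq_integral do rewrite EFinM.
  rewrite ge0_integralZl.
  - by rewrite -/I IM -EFinM divfK ?gt_eqF.
  - exact: measurableT.
  - by apply/measurable_EFinP.
  - by move=> x _; rewrite lee_fin.
  - by rewrite lee_fin divr_ge0 ?invr_ge0 ?ler0n // ltW.
have HS : (ess_sup mu (fun x => if q x == +oo%E then (`|g x|)%:E else 0%E) <= (2^-1)%:E)%E.
  apply/ess_supP; apply: aeW => x.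
  case: ifPn => [/eqP qoo|_]; last by rewrite lee_fin invr_ge0 ler0n.
  rewrite lee_fin ger0_norm // /g /iq qoo /= mulr0 oppr0 !powRr0 mulr1.
  by rewrite indicE; case: (x \in E); rewrite ?mulr1 ?mulr0 ?invr_ge0 ?ler0n.
apply: (@le_trans _ _ ((2^-1)%:E + (2^-1)%:E)%E); first exact: leeD.
by rewrite -EFinD lee_fin -div1r -splitr.
Qed.

Lemma cube_meas (R : realType) (n : nat) (a b : R) :
  measurable [set t : n.-tuple R | forall i : 'I_n, `[a, b]%classic (tnth t i)].
Proof.
have -> : [set t : n.-tuple R | forall i : 'I_n, `[a, b]%classic (tnth t i)] =
    \bigcap_(i in [set: 'I_n]) ((fun t : n.-tuple R => tnth t i) @^-1` `[a, b]%classic).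
  by apply/seteqP; split => [t /= H i _|t /= H i]; [exact: H|exact: H].
apply: fin_bigcap_measurable; first exact: finite_finset.
move=> i _; rewrite -[X in measurable X]setTI.
exact: (measurable_tnth i) measurableT _ (measurable_itv _).
Qed.

Lemma cube_fin (R : realType) (n : nat) (mu : {measure set (n.-tuple R) -> \bar R}) (a b : R) :
  is_lebesgue_n mu ->
  mu [set t : n.-tuple R | forall i : 'I_n, `[a, b]%classic (tnth t i)] \is a fin_num.
Proof.
move=> hL; rewrite (hL (fun=> `[a, b]%classic)) //.
apply: prode_fin_num => i _; rewrite lebesgue_measure_itv /=.
by case: ifP => // _; rewrite -EFinD.
Qed.

Lemma mu_pos (R : realType) (n : nat) (mu : {measure set (n.-tuple R) -> \bar R}) :
  is_lebesgue_n mu -> (0 < mu setT)%E.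
Proof.
move=> hL.
apply: (@lt_le_trans _ _ (mu [set t : n.-tuple R | forall i : 'I_n, `[0%R, 1%R]%classic (tnth t i)])).
  rewrite (hL (fun=> `[0%R, 1%R]%classic)) //.
  rewrite big1 ?lte01 // => i _; rewrite lebesgue_measure_itv /= lte_fin ltr01.
  by rewrite oppr0 adde0.
by apply: le_measure; rewrite ?inE //; exact: cube_meas.
Qed.

Lemma exhaust (R : realType) (n : nat) (mu : {measure set (n.-tuple R) -> \bar R})
  (p : n.-tuple R -> \bar R) (f : n.-tuple R -> R) (lam : R) :
  is_lebesgue_n mu -> measurable_fun setT p ->
  measurable_fun setT f -> 0 < lam ->
  (1 < \int[mu]_x ((`|f x / lam| `^ fine (p x))%:E))%E ->
  exists E : set (n.-tuple R), [/\ measurable E,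
    (1 < \int[mu]_x ((`|f x / lam| `^ fine (p x) * \1_E x)%:E))%E &
    (\int[mu]_x ((`|f x / lam| `^ fine (p x) * \1_E x)%:E) < +oo)%E].
Proof.
move=> hL mp mf lam0 H1.
set F := fun x => `|f x / lam| `^ fine (p x).
have mF : measurable_fun setT F := mpowR (mdiv lam mf) mp.
have F0 x : 0 <= F x by exact: powR_ge0.
set C := fun N : nat =>
  [set t : n.-tuple R | forall i : 'I_n, `[(- N%:R)%R, N%:R]%classic (tnth t i)].
set E := fun N : nat => (F @^-1` `]-oo, N%:R]%classic) `&` C N.
have mE N : measurable (E N).
  apply: measurableI; last exact: cube_meas.
  by rewrite -[X in measurable X]setTI; apply: mF => //; exact: measurable_itv.
have EF N x : E N x -> F x <= N%:R.
  by case => /=; rewrite in_itv /= => ->.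
have ndE N M x : (N <= M)%N -> E N x -> E M x.
  move=> NM [/= h1 h2]; split => /=.
    move: h1; rewrite !in_itv /= => h; apply: le_trans h _; by rewrite ler_nat.
  move=> i; move: (h2 i); rewrite /= !in_itv /= => /andP[h3 h4].
  by rewrite (le_trans _ h3) ?(le_trans h4) // ?lerN2 ler_nat.
set g' := fun N x => (F x * \1_(E N) x)%:E.
have mg' N : measurable_fun setT (g' N).
  by apply/measurable_EFinP; apply: measurable_funM => //; exact: measurable_indic.
have g'0 N x : setT x -> (0 <= g' N x)%E.
  by move=> _; rewrite lee_fin mulr_ge0 // indicE ler0n.
have g'nd x : setT x -> {homo g'^~ x : N M / (N <= M)%N >-> (N <= M)%E}.
  move=> _ N M NM; rewrite lee_fin ler_wpM2l // !indicE.
  case: (boolP (x \in E N)) => h; last by rewrite ler0n.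
  by rewrite mem_set //; apply: ndE NM (set_mem h).
have mct := @cvg_monotone_convergence _ _ _ mu setT measurableT g' mg' g'0 g'nd.
have limE x : limn (g'^~ x) = (F x)%:E.
  apply: lim_near_cst => //.
  set S := F x + \sum_(i < n) `|tnth x i|.
  have S0 : 0 <= S by rewrite addr_ge0 // sumr_ge0.
  exists (Num.truncn S).+1 => // N /= hN.
  have SN : S <= N%:R.
    apply: ltW; apply: (lt_le_trans (truncnS_gt S)); by rewrite ler_nat.
  rewrite /g' indicE mem_set ?mulr1 //; split => /=.
    rewrite in_itv /=; apply: le_trans SN; by rewrite lerDl sumr_ge0.
  move=> i; suff : tnth x i \in `[(- N%:R)%R, N%:R] by []; rewrite in_itv /= -ler_norml; apply: le_trans SN.
  rewrite /S (bigD1 i) //= addrCA lerDl addr_ge0 // sumr_ge0 //.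
have eqF : (\int[mu]_x limn (g'^~ x))%E = (\int[mu]_x (F x)%:E)%E.
  by apply: eq_integral => x _; rewrite limE.
rewrite eqF in mct.
set u := fun N => (\int[mu]_x g' N x)%E.
have und : {homo u : N M / (N <= M)%N >-> (N <= M)%E}.
  move=> N M NM; apply: ge0_le_integral => //.
  - by move=> x _; exact: g'0.
  - by move=> x _; exact: (g'nd x I N M NM).
have hsup := ereal_nondecreasing_cvgn und.
have equ : (\int[mu]_x (F x)%:E)%E = ereal_sup (range u).
  exact: (@cvg_unique _ (@ereal_hausdorff R) _ _ _ _ mct hsup).
rewrite equ in H1.
have [_ [N _ <-] uN1] := ereal_sup_gt H1.
exists (E N); split => //.
apply: (@le_lt_trans _ _ (\int[mu]_x ((N%:R * \1_(C N) x)%:E))%E).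
  apply: ge0_le_integral => //.
  - exact: mg' N.
  - apply/measurable_EFinP; apply: measurable_funM; first exact: measurable_cst.
    by apply: measurable_indic; exact: cube_meas.
  move=> x _; rewrite lee_fin !indicE.
  case: (boolP (x \in E N)) => h; last by rewrite mulr0 mulr_ge0 ?ler0n.
  move/set_mem : (h) => [h1 h2].
  by rewrite mem_set // !mulr1; apply: EF.
under eq_integral do rewrite EFinM.
rewrite ge0_integralZl //; last first.
  by apply/measurable_EFinP; apply: measurable_indic; exact: cube_meas.
rewrite integral_indic //; last exact: cube_meas.
rewrite setIT.
have hf := @cube_fin R n mu (- N%:R)%R N%:R hL.
rewrite /C -(fineK hf) -EFinM; exact: ltry.
Qed.

Lemma half_le (R : realType) (v D : \bar R) : (0 <= v)%E -> (0 <= D)%E ->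
  (forall lam : R, 0 < lam -> (lam%:E < v)%E -> ((lam / 2)%:E <= D)%E) ->
  ((2^-1)%:E * v <= D)%E.
Proof.
move=> v0 D0 H; case: D D0 H => [d| |]; last by move=> h; exfalso; move: h; rewrite leeNy_eq.
  2: by move=> _ _; rewrite leey.
rewrite lee_fin => d0 H.
move: v0 H; case: v => [a| |] // a0 H.
  rewrite -EFinM lee_fin leNgt; apply/negP => h.
  rewrite lee_fin in a0.
  have := H (d + a / 2) _ _; rewrite lee_fin lte_fin.
  have hh : (d + a / 2) / 2 <= d -> False by move=> hh; lra.
  by move=> /(_ _ _)/hh; apply; lra.
have := H (2 * d + 2) _ _; rewrite lee_fin ltry.
by move=> /(_ _ erefl) hh; exfalso; move: hh; lra.
Qed.

Lemma dual_ge0 (R : realType) (n : nat) (mu : {measure set (n.-tuple R) -> \bar R})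
  (q r : n.-tuple R -> \bar R) (f : n.-tuple R -> R) :
  (0 < mu setT)%E -> var_exponent q -> (0 <= dual_vnorm mu q r f)%E.
Proof.
move=> mu0 [mq q1].
apply: (le_trans (vnorm_ge0 mu r (fun x => f x * 0))).
apply: ereal_sup_ubound; exists (fun _ => 0) => //; split; first exact: measurable_cst.
apply: (@vnorm_le _ _ mu q _ 1 ltr01).
rewrite /modular.
have -> : (\int[mu]_(x in [set x | (q x < +oo)%E]) ((`|0 / 1| `^ fine (q x))%:E))%E = 0%E.
  apply: integral0_eq => x /= qx; rewrite mul0r normr0 powR0 //.
  move: (q1 x) qx; case: (q x) => // Q; rewrite lee_fin /= => Q1 _.
  by rewrite gt_eqF // (lt_le_trans ltr01 Q1).
have -> : (fun x : n.-tuple R => if q x == +oo%E then ((`|0 / 1|)%R)%:E else 0%E) = (cst 0%E : n.-tuple R -> \bar R).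
  by apply: funext => x; rewrite mul0r normr0; case: ifP.
by rewrite ess_sup_cst // add0e lee01.
Qed.

Local Open Scope ereal_scope.

Theorem mainTheorem10 (R : realType) (n : nat)
    (mu : {measure set (n.-tuple R) -> \bar R})
    (p q r : n.-tuple R -> \bar R) :
  is_lebesgue_n mu ->
  var_exponent p -> var_exponent q -> var_exponent r ->
  (forall x, einv (r x) = (einv (p x) + einv (q x))%R) ->
  ((forall x, r x < p x < +oo) \/
   ((forall x, r x <= p x < +oo) /\ ess_sup mu r < +oo)) ->
  exists c1 c2 : R, (0 < c1)%R /\ (0 < c2)%R /\
    forall f : n.-tuple R -> R, measurable_fun setT f ->
      c1%:E * vnorm mu p f <= dual_vnorm mu q r f /\
      dual_vnorm mu q r f <= c2%:E * vnorm mu p f.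
Proof.
move=> hL vp vq vr hpqr hcase.
have mu0 := mu_pos hL.
have hrp : forall x, r x <= p x < +oo.
  case: hcase => [H|[H _]] x; last exact: H.
  by case/andP: (H x) => /ltW -> ->.
have pfin x : p x < +oo by case/andP: (hrp x).
exists (2^-1)%R, 2%R; split; first by rewrite invr_gt0 ltr0n.
split; first by rewrite ltr0n.
move=> f mf; split.
  apply: half_le; [exact: vnorm_ge0 | exact: dual_ge0 | ].
  move=> lam lam0 hlt.
  have H1 : 1 < modular mu p (fun x => f x / lam)%R.
    rewrite ltNge; apply/negP => H.
    by have := vnorm_le lam0 H; rewrite leNgt hlt.
  rewrite (@mod_fin _ _ mu _ _ mu0 pfin) in H1.
  have [E [mE HE1 HEfin]] := exhaust hL vp.1 mf lam0 H1.
  exact: (lower_from_E mu0 vp vq vr hpqr hrp mf mE lam0 HE1 HEfin).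
apply: ge_ereal_sup => _ [g [mg vg] <-].
apply: upper_bound => //; exact: vq.
Qed.
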